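(* Let $(X,d)$ be a separable metric space, $T\colon X\to X$ a Borel measurable map, $(s_n)_{n\ge1}$ a scale sequence, and $\mu,\nu$ Borel probability measures on $X$ (not necessarily $T$-invariant). Assume $\nu$ is decisive. Then $\phi(x,y)=\liminf_{n\to\infty}s_n\,d(T^nx,y)$ satisfies $\phi(x,y)\in\{0,\infty\}$ for $\mu\times\nu$-almost every $(x,y)$.
   Context: A scale sequence is a sequence of positive reals $s_n$ with $s_n\to\infty$. A Borel probability measure $\nu$ on $(X,d)$ is decisive if for every sequence $(x_n)$ in $X$ and every scale sequence $(s_n)$, the function $\omega(x)=\liminf_n s_n d(x_n,x)$ lies in $\{0,\infty\}$ for $\nu$-a.e. $x$. *)

(* Defs.v *)
From HB Require Import structures.
From mathcomp Require Import all_boot all_order all_algebra.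
From mathcomp Require Import all_classical all_reals all_analysis.
Set Implicit Arguments. Unset Strict Implicit. Unset Printing Implicit Defensive.
Import Order.TTheory GRing.Theory Num.Theory.
Local Open Scope classical_set_scope.
Local Open Scope ring_scope.

Definition is_metric {R : realType} {X : Type} (d : X -> X -> R) : Prop :=
  [/\ (forall x y, 0 <= d x y),
      (forall x y, d x y = 0 <-> x = y),
      (forall x y, d x y = d y x) &
      (forall x y z, d x z <= d x y + d y z)].

Definition metric_open {R : realType} {X : Type} (d : X -> X -> R) (A : set X) : Prop :=
  forall x, A x -> exists2 e : R, 0 < e & [set y | d x y < e] `<=` A.

Definition metric_separable {R : realType} {X : Type} (d : X -> X -> R) : Prop :=
  exists D : set X, countable D /\
    forall x (e : R), 0 < e -> exists2 y, D y & d x y < e.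

Definition is_borel_of {R : realType} {dX : measure_display} {X : measurableType dX}
  (d : X -> X -> R) : Prop :=
  (@measurable _ X) = <<s [set A | metric_open d A] >>.

Definition scale_sequence {R : realType} (s : nat -> R) : Prop :=
  (forall n, 0 < s n) /\ (s @ \oo --> +oo).

Definition decisive {R : realType} {dX : measure_display} {X : measurableType dX}
  (d : X -> X -> R) (nu : probability X R) : Prop :=
  forall (xs : nat -> X) (s : nat -> R), scale_sequence s ->
    {ae nu, forall x, limn_einf (fun n => (s n * d (xs n) x)%:E) = 0%E
                  \/ limn_einf (fun n => (s n * d (xs n) x)%:E) = +oo%E}.

(* Main.v *)
Require Import Defs.
From HB Require Import structures.
From mathcomp Require Import all_boot all_order all_algebra.
From mathcomp Require Import all_classical all_reals all_analysis.
From mathcomp Require Import measurable_realfun lra.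
Import Order.TTheory GRing.Theory Num.Theory.
Local Open Scope classical_set_scope.
Local Open Scope ring_scope.

Section helpers.
Context (R : realType) (dX : measure_display) (X : measurableType dX)
  (d : X -> X -> R).
Hypothesis hd : is_metric d.
Hypothesis hb : is_borel_of d.

Lemma ball_meas (c : X) (e : R) : measurable [set y | d c y < e].
Proof.
rewrite hb; apply: sub_sigma_algebra => x /= hx.
case: hd => _ _ _ tri.
exists (e - d c x); first by rewrite subr_gt0.
move=> y /= hy; have := tri c x y; lra.
Qed.

Lemma dist_meas (g : nat -> X) :
  (forall x (e : R), 0 < e -> exists k, d x (g k) < e) ->
  measurable_fun setT (fun p : X * X => d p.1 p.2).
Proof.
move=> dense.
case: hd => pos _ sym tri.
apply: (measurability _ (RGenInftyO.measurableE R)).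
move=> _ [_ [r ->] <-].
rewrite [X in measurable X](_ : _ = \bigcup_k \bigcup_m
   ([set x | d (g k) x < m.+1%:R^-1] `*` [set y | d (g k) y < r - m.+1%:R^-1])).
  apply: bigcupT_measurable => k; apply: bigcupT_measurable => m.
  by apply: measurableX; apply: ball_meas.
apply/seteqP; split.
- move=> [x y] /= [_]; rewrite /= in_itv /= => hxy.
  pose e := r - d x y.
  have e0 : 0 < e by rewrite /e subr_gt0.
  pose m := Num.truncn (2 / e).
  have hM := truncnS_gt (2 / e).
  rewrite -/m in hM.
  set M := m.+1%:R in hM.
  have M0 : 0 < M :> R by rewrite /M ltr0n.
  pose a := M^-1.
  have a0 : 0 < a by rewrite /a invr_gt0.
  have aM : a * M = 1 by rewrite /a mulVf // gt_eqF.
  have h2 : 2 < M * e by rewrite -ltr_pdivrMr.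
  have h2a : 2 * a < e.
    have : 2 * a < (M * e) * a by rewrite ltr_pM2r.
    have -> : M * e * a = e by rewrite mulrAC (mulrC M) aM mul1r.
    by [].
  have [k hk] := dense x a a0.
  exists k => //; exists m => //; split => /=.
    by rewrite -/M -/a sym.
  rewrite -/M -/a; have := tri (g k) x y; rewrite sym in hk; rewrite /e in h2a; lra.
- move=> [x y] [k _ [m _ [/= h1 h2]]]; split => //; rewrite /= in_itv /=.
  have := tri x (g k) y; rewrite sym in h1; set a := m.+1%:R^-1 in h1 h2 *; lra.
Qed.

End helpers.

Lemma iter_meas (dX : measure_display) (X : measurableType dX) (T : X -> X) :
  measurable_fun setT T -> forall n, measurable_fun setT (iter n T).
Proof.
move=> mT; elim => [|n IH] /=; first exact: measurable_id.
rewrite (_ : iter n.+1 T = T \o iter n T); last by apply: funext.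
exact: measurableT_comp.
Qed.

Theorem theorem5p3 (R : realType) (dX : measure_display) (X : measurableType dX)
  (d : X -> X -> R) (T : X -> X) (s : nat -> R)
  (mu nu : probability X R) :
  is_metric d -> metric_separable d -> is_borel_of d ->
  measurable_fun setT T ->
  scale_sequence s ->
  decisive d nu ->
  {ae (mu \x nu)%E, forall p : X * X,
     limn_einf (fun n => (s n * d (iter n T p.1) p.2)%:E) = 0%E
  \/ limn_einf (fun n => (s n * d (iter n T p.1) p.2)%:E) = +oo%E}.
Proof.
move=> hd [D [hD dense]] hb mT hs hdec.
have [[x0 _]|hne] := pselect (exists x : X, True); last first.
  by apply: aeW => p; exfalso; apply: hne; exists p.1.
have [g gdense] : exists g : nat -> X,
    forall x (e : R), 0 < e -> exists k, d x (g k) < e.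
  move/pfcard_geP: hD => [D0|/surjfunPex [g Dg]].
    by have [y Dy _] := dense x0 1 ltr01; rewrite D0 in Dy.
  exists g => x e e0; have [y Dy hy] := dense x e e0.
  by rewrite Dg in Dy; case: Dy => k _ hk; exists k; rewrite hk.
have md := @dist_meas _ _ _ _ hd hb _ gdense.
pose F n (p : X * X) := (s n * d (iter n T p.1) p.2)%:E.
have mF : forall n, measurable_fun setT (F n).
  move=> n; apply/measurable_EFinP.
  apply: (measurableT_comp (mulrl_measurable (s n))).
  apply: (measurableT_comp md (g := fun p : X * X => (iter n T p.1, p.2))).
  apply: measurable_fun_pair => /=.
    apply: (measurableT_comp (f := iter n T) (g := fst)); [exact: iter_meas|exact: measurable_fst].
  exact: measurable_snd.
pose L p := limn_einf (fun n => F n p).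
have mL : measurable_fun setT L.
  rewrite /L /limn_einf.
  apply: (measurableT_comp (f := -%E) (g := fun p => limn_esup (fun n => - F n p)%E)); first exact: oppe_measurable.
  apply: (measurable_fun_limn_esup (f := fun n p => - F n p)%E) => n.
  apply: (measurableT_comp (f := -%E) (g := F n)); [exact: oppe_measurable|exact: mF].
pose B := [set p | ~ (L p = 0%E \/ L p = +oo%E)].
have mB : measurable B.
  have -> : B = setT `&` L @^-1` (~` ([set 0%E] `|` [set +oo%E])).
    by apply/seteqP; split => p /=; [move=> h; split => //= [[]]|case].
  apply: mL => //; apply: measurableC; apply: measurableU; exact: emeasurable_set1.
suff : (mu \x nu)%E.-negligible B by [].
exists B; split => //.
rewrite /product_measure1 /= (eq_integral (cst 0%E)) ?integral0 // => x _ /=.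
have [N [mN N0 sub]] := hdec (fun n => iter n T x) s hs.
apply: (subset_measure0 (measurable_xsection x mB) mN _ N0).
by move=> y; rewrite /xsection /= inE => hy; apply: sub; exact: hy.
Qed.
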